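(* Let $A=\mathrm{diag}(\lambda_1,\ldots,\lambda_n)$ with $1=\lambda_1\le\lambda_2\le\cdots\le\lambda_n$, let $b\in\mathbb{R}^n$, and $f(x)=\tfrac12x^TAx-b^Tx$, with gradient $g(x)=Ax-b$. Consider the gradient method $x_{k+1}=x_k-\alpha_kg_k$, $g_k=g(x_k)$, started from $x_1\in\mathbb{R}^n$ with an arbitrary first stepsize $\alpha_1>0$, and for $k\ge2$ (as long as $g_{k-1}\neq0$) $$\alpha_k=\gamma_k\frac{s_{k-1}^Ts_{k-1}}{s_{k-1}^Ty_{k-1}}+(1-\gamma_k)\frac{s_{k-1}^Ty_{k-1}}{y_{k-1}^Ty_{k-1}},\qquad s_{k-1}=x_k-x_{k-1},\ y_{k-1}=g_k-g_{k-1},$$ where $\gamma_k\in[0,1]$ for every $k$. Then either $g_k=0$ for some finite $k$, or the sequence $\{\|g_k\|\}$ converges to zero $R$-linearly.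
   Context: $\|\cdot\|$ is the Euclidean norm. A nonnegative sequence $\{a_k\}$ converges to zero $R$-linearly if there exist constants $C>0$ and $c\in(0,1)$ with $a_k\le Cc^k$ for all $k$. *)

(* Defs.v *)
From HB Require Import structures.
From mathcomp Require Import all_boot all_order all_algebra.
From mathcomp Require Import reals.
Set Implicit Arguments. Unset Strict Implicit. Unset Printing Implicit Defensive.
Import Order.TTheory GRing.Theory Num.Theory.
Local Open Scope ring_scope.

Definition dotv (R : realType) (n : nat) (u v : 'cV[R]_n) : R := (u^T *m v) 0 0.

Definition enorm (R : realType) (n : nat) (u : 'cV[R]_n) : R := Num.sqrt (dotv u u).

Definition diagA (R : realType) (n : nat) (lam : 'I_n -> R) : 'M[R]_n :=
  diag_mx (\row_i lam i).

Definition grad (R : realType) (n : nat) (lam : 'I_n -> R) (b x : 'cV[R]_n)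
  : 'cV[R]_n := diagA lam *m x - b.

Definition R_linear_to_zero (R : realType) (a : nat -> R) : Prop :=
  exists (C c : R), 0 < C /\ 0 < c < 1 /\ forall k, (1 <= k)%N -> a k <= C * c ^+ k.

(* Main.v *)
Require Import Defs.
From HB Require Import structures.
From mathcomp Require Import all_boot all_order all_algebra.
From mathcomp Require Import reals.
From mathcomp Require Import ring lra.
From Stdlib Require Classical_Prop.
Import Order.TTheory GRing.Theory Num.Theory.
Local Open Scope ring_scope.

Lemma gradE (R : realType) n (lam : 'I_n -> R) b z (i : 'I_n) (j : 'I_1) :
  (grad lam b z) i j = lam i * z i j - b i j.
Proof.
by rewrite /grad /diagA mul_diag_mx !mxE.
Qed.

Lemma subscE (R : realType) n (z g : 'cV[R]_n) (a : R) i j :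
  (z - a *: g) i j = z i j - a * g i j.
Proof. by rewrite !mxE. Qed.

Lemma subE (R : realType) n (z g : 'cV[R]_n) i j :
  (z - g) i j = z i j - g i j.
Proof. by rewrite !mxE. Qed.

Lemma dotvE (R : realType) n (u v : 'cV[R]_n) :
  dotv u v = \sum_(i < n) u i ord0 * v i ord0.
Proof.
rewrite /dotv mxE; apply: eq_bigr => i _; by rewrite mxE.
Qed.

Lemma sqrtX (R : realType) (c : R) k : 0 <= c -> Num.sqrt (c ^+ k) = Num.sqrt c ^+ k.
Proof.
move=> hc; elim: k => [|k IH]; first by rewrite !expr0 sqrtr1.
by rewrite !exprS sqrtrM // IH.
Qed.
Lemma contr (R : realType) (L t : R) : 1 <= L -> 1 <= t * L -> t <= 3/2 ->
  (1 - t)^+2 <= 1 - L^-1/4.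
Proof. move=> hL htL ht.
have hL0 : 0 < L by lra.
set s := L^-1.
have hs : s * L = 1 by rewrite /s mulVf // gt_eqF.
have hs0 : 0 < s by rewrite /s invr_gt0.
have hs1 : s <= 1 by rewrite /s invr_le1 // ?unitf_gt0.
have hts : s <= t.
  have : s * 1 <= s * (t * L) by rewrite ler_pM2l.
  by rewrite mulr1 mulrCA hs mulr1.
nra.
Qed.
Lemma grow (R : realType) (L t : R) : 1 <= L -> 0 <= t -> t <= L ->
  (1 - t)^+2 <= L^+2.
Proof. move=> *; nra. Qed.

Lemma powle (R : realType) (c r : R) k : 0 <= c -> c <= r -> c ^+ k <= r ^+ k.
Proof. move=> h0 h1; apply: lerXn2r; rewrite ?nnegrE //; lra. Qed.

Lemma base_le (R : realType) (w r D : R) : 0 < r -> w / r <= D -> w <= D * r.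
Proof. by move=> hr; rewrite ler_pdivrMr. Qed.

Lemma comp_decay (R: realType) n (lam : 'I_n.+1 -> R) (L : R) (a : nat -> R)
  (w : nat -> 'I_n.+1 -> R) (j : 'I_n.+1) (G : nat -> R) (C c : R) :
 1 <= L -> (forall i, 1 <= lam i <= L) -> (forall k i, 0 <= w k i) ->
 (forall k i, (1<=k)%N -> w k.+1 i = (1 - a k * lam i)^+2 * w k i) ->
 (forall k, (2<=k)%N -> 1 <= a k * L /\ a k <= 1) ->
 (forall k e, (2<=k)%N -> 0 <= e -> G k.-1 <= e -> 2*L*e <= w k.-1 j ->
     a k * lam j <= 3/2) ->
 0 < C -> 0 < c < 1 -> (forall k, (1<=k)%N -> G k <= C * c^+k) ->
 exists D rho, 0 < D /\ c <= rho /\ rho < 1 /\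
   forall k, (1<=k)%N -> w k j <= D * rho^+k.
Proof.
move=> hL hlam hw hrec hab hA hC /andP[hc0 hc1] hG.
have hL0 : 0 < L by lra.
set q := 1 - L^-1/4.
have hLi0 : 0 < L^-1 by rewrite invr_gt0.
have hLi1 : L^-1 <= 1 by rewrite invr_le1 // ?unitf_gt0.
have hq0 : 0 < q by rewrite /q; lra.
have hq1 : q < 1 by rewrite /q; lra.
set rho := q + c - q * c.
have hr0 : 0 < rho by rewrite /rho; nra.
have hr1 : rho < 1 by rewrite /rho; nra.
have hcr : c <= rho by rewrite /rho; nra.
have hqr : q <= rho by rewrite /rho; nra.
have hrk : forall k, 0 < rho ^+ k by move=> k; rewrite exprn_gt0.
have hapos : forall k, (2 <= k)%N -> 0 < a k.
  by move=> k /hab [h1 h2]; nra.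
have hfac : forall k i, (2 <= k)%N -> (1 - a k * lam i)^+2 <= L^+2.
  move=> k i hk; have := hab _ hk; have := hapos _ hk; have := hlam i; move=> /andP[? ?] ? [? ?].
  apply: grow => //; nra.
set t1 := w 1%N j / rho; set t2 := w 2%N j / rho^+2; set t3 := w 3%N j / rho^+3.
set t4 := 2 * L^+5 * C / rho^+2.
have ht1 : 0 <= t1 by rewrite /t1 divr_ge0 // ltW.
have ht2 : 0 <= t2 by rewrite /t2 divr_ge0 // ltW.
have ht3 : 0 <= t3 by rewrite /t3 divr_ge0 // ltW.
have hL5 : 0 <= L^+5 by apply: exprn_ge0; lra.
have ht4 : 0 <= t4 by rewrite /t4 divr_ge0 ?(ltW (hrk 2%N)) //; nra.
exists (t1 + t2 + t3 + t4 + 1), rho; split; first lra.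
split=> //; split=> //.
suff H : forall m k, (1 <= k <= m)%N -> w k j <= (t1 + t2 + t3 + t4 + 1) * rho ^+ k.
  by move=> k hk; apply: (H k); rewrite hk leqnn.
elim=> [|m IH] k; first by case: k.
case/andP=> hk1; rewrite leq_eqVlt => /orP[/eqP -> | hk]; last first.
  by apply: IH; rewrite hk1 -ltnS.
case: m IH {hk1} => [|[|[|p]]] IH.
- by apply: base_le => //; rewrite -/t1; lra.
- by apply: base_le => //; rewrite -/t2; lra.
- by apply: base_le => //; rewrite -/t3; lra.
set D := t1 + t2 + t3 + t4 + 1.
have IH3 : w p.+3 j <= D * rho ^+ p.+3 by apply: IH; rewrite leqnn.
have hGp : G p.+2 <= C * c ^+ p.+2 by apply: hG.
have he0 : 0 <= C * c ^+ p.+2 by rewrite mulr_ge0 ?exprn_ge0; lra.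
have [hbig|hsmall] := lerP (2 * L * (C * c ^+ p.+2)) (w p.+2 j).
- have ht := hA p.+3 _ isT he0 hGp hbig.
  have [h1 h2] := hab p.+3 isT.
  have hap := hapos p.+3 isT.
  have hq : (1 - a p.+3 * lam j)^+2 <= q.
    apply: contr => //; have := hlam j => /andP[? ?]; nra.
  rewrite hrec // exprS.
  have hwp := hw p.+3 j.
  have hD0 : 0 <= D by rewrite /D; lra.
  apply: (le_trans (ler_wpM2r hwp hq)).
  apply: (le_trans (ler_wpM2l (ltW hq0) IH3)).
  rewrite mulrCA; apply: ler_wpM2l => //.
  by apply: ler_wpM2r => //; rewrite ltW.
- rewrite hrec // hrec //.
  have f1 := hfac p.+3 j isT; have f2 := hfac p.+2 j isT.
  have hwp := hw p.+2 j.
  have hcp : c ^+ p.+2 <= rho ^+ p.+2 by apply: powle; lra.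
  have e1 : (1 - a p.+3 * lam j) ^+ 2 * ((1 - a p.+2 * lam j) ^+ 2 * w p.+2 j)
      <= L^+2 * (L^+2 * (2 * L * (C * c ^+ p.+2))).
    apply: ler_pM => //; first exact: sqr_ge0.
      by rewrite mulr_ge0 // sqr_ge0.
    apply: ler_pM => //; first exact: sqr_ge0.
    lra.
  apply: (le_trans e1).
  have e2 : L ^+ 2 * (L ^+ 2 * (2 * L * (C * c ^+ p.+2))) <= t4 * rho ^+ p.+4.
    have -> : t4 * rho ^+ p.+4 = 2 * L^+5 * C * rho ^+ p.+2.
      rewrite /t4 -[p.+4]addn2 exprD; field.
      by rewrite gt_eqF // exprn_gt0.
    have -> : L ^+ 2 * (L ^+ 2 * (2 * L * (C * c ^+ p.+2))) = 2 * L^+5 * C * c ^+ p.+2 by ring.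
    apply: ler_wpM2l => //; nra.
  apply: (le_trans e2); rewrite /D ler_pM2r //; lra.
Qed.

Lemma sum_split (R : realType) n (f : 'I_n.+1 -> R) l (hl : (l < n.+1)%N) :
  \sum_(i < n.+1 | (i < l.+1)%N) f i
  = f (Ordinal hl) + \sum_(i < n.+1 | (i < l)%N) f i.
Proof.
rewrite (bigD1 (Ordinal hl)) //=; congr (_ + _).
apply: eq_bigl => i /=.
have -> : (i != Ordinal hl) = (nat_of_ord i != l).
  by apply/idP/idP => /eqP h; apply/eqP => e; apply: h; [apply: val_inj | rewrite e].
rewrite ltnS; case: (ltngtP i l) => h; by rewrite ?andbT ?andbF ?h ?ltn_eqF ?gtn_eqF // ?eqxx.
Qed.

Lemma all_decay (R: realType) n (lam : 'I_n.+1 -> R) (L : R) (a : nat -> R)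
  (w : nat -> 'I_n.+1 -> R) :
 1 <= L -> (forall i, 1 <= lam i <= L) -> (forall k i, 0 <= w k i) ->
 (forall k i, (1<=k)%N -> w k.+1 i = (1 - a k * lam i)^+2 * w k i) ->
 (forall k, (2<=k)%N -> 1 <= a k * L /\ a k <= 1) ->
 (forall k (j : 'I_n.+1) e, (2<=k)%N -> 0 <= e ->
     \sum_(i < n.+1 | (i < j)%N) w k.-1 i <= e -> 2*L*e <= w k.-1 j ->
     a k * lam j <= 3/2) ->
 forall l, (l <= n.+1)%N -> exists C c, 0 < C /\ 0 < c < 1 /\
   forall k, (1<=k)%N -> \sum_(i < n.+1 | (i < l)%N) w k i <= C * c^+k.
Proof.
move=> hL hlam hw hrec hab hA; elim=> [|l IH] hl.
  exists 1, (1/2); split; first lra; split; first lra.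
  move=> k _; rewrite big_pred0 // mul1r; apply: exprn_ge0; lra.
have [C [c [hC [hc hG]]]] := IH (ltnW hl).
have [D [rho [hD [hcr [hr1 hw2]]]]] :=
  @comp_decay R n lam L a w (Ordinal hl) (fun k => \sum_(i < n.+1 | (i < l)%N) w k i) C c
   hL hlam hw hrec hab (fun k e => hA k (Ordinal hl) e) hC hc hG.
case/andP: hc => hc0 hc1.
exists (C + D), rho; split; first lra; split; first (apply/andP; split; lra).
move=> k hk; rewrite sum_split.
have h1 := hw2 k hk; have h2 := hG k hk.
have h3 : c ^+ k <= rho ^+ k by apply: powle; lra.
have h4 : C * c ^+ k <= C * rho ^+ k by apply: ler_wpM2l => //; lra.
rewrite mulrDl; lra.
Qed.

Lemma propA (R : realType) n (v mu : 'I_n.+1 -> R) (j : 'I_n.+1) e :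
 (forall i, 0 <= v i) -> (forall i, 0 <= mu i) ->
 (forall i k : 'I_n.+1, (i <= k)%N -> mu i <= mu k) ->
 \sum_(i < n.+1 | (i < j)%N) v i <= e -> 2 * e <= v j ->
 2/3 * mu j * \sum_(i < n.+1) v i <= \sum_(i < n.+1) mu i * v i.
Proof.
move=> hv hmu hmono hA hvj.
rewrite (bigID (fun i : 'I_n.+1 => (i < j)%N)) /=.
rewrite [X in _ <= X](bigID (fun i : 'I_n.+1 => (i < j)%N)) /=.
set A := \sum_(i < n.+1 | _) v i in hA *.
set B := \sum_(i < n.+1 | ~~ _) v i.
set X := \sum_(i < n.+1 | (i < j)%N) (mu i * v i).
set Y := \sum_(i < n.+1 | ~~ _) (mu i * v i).
have hX : 0 <= X by apply: sumr_ge0 => i _; rewrite mulr_ge0.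
have hA0 : 0 <= A by apply: sumr_ge0.
have hY : mu j * B <= Y.
  rewrite /B /Y mulr_sumr; apply: ler_sum => i hi.
  apply: ler_wpM2r => //; apply: hmono; by rewrite leqNgt.
have hB : v j <= B.
  rewrite /B (bigD1 j) /=; last by rewrite ltnn.
  have : 0 <= \sum_(i < n.+1 | ~~ (i < j)%N && (i != j)) v i by apply: sumr_ge0.
  lra.
have := hmu j; nra.
Qed.

Theorem theorem3 (R : realType) (n : nat) (lam : 'I_n.+1 -> R)
  (b : 'cV[R]_n.+1) (x : nat -> 'cV[R]_n.+1) (alpha gamma : nat -> R)
  (hlam1 : lam ord0 = 1)
  (hlam_sorted : forall i j : 'I_n.+1, (i <= j)%N -> lam i <= lam j)
  (halpha1 : 0 < alpha 1%N)
  (hgamma : forall k, (1 <= k)%N -> 0 <= gamma k <= 1)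
  (hiter : forall k, (1 <= k)%N ->
     x k.+1 = x k - alpha k *: grad lam b (x k))
  (hstep : forall k, (2 <= k)%N -> grad lam b (x k.-1) != 0 ->
     let s := x k - x k.-1 in
     let y := grad lam b (x k) - grad lam b (x k.-1) in
     alpha k = gamma k * (dotv s s / dotv s y)
               + (1 - gamma k) * (dotv s y / dotv y y)) :
  (exists k, (1 <= k)%N /\ grad lam b (x k) = 0)
  \/ R_linear_to_zero (fun k => enorm (grad lam b (x k))).
Proof.
case: (Classical_Prop.classic (exists k, (1 <= k)%N /\ grad lam b (x k) = 0)) => [H|H]; [by left|right].
have hnz : forall k, (1 <= k)%N -> grad lam b (x k) != 0.
  by move=> k hk; apply/eqP => e; apply: H; exists k.
set L := lam ord_max.
have hlamb : forall i, 1 <= lam i <= L.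
  move=> i; rewrite -hlam1; apply/andP; split; apply: hlam_sorted => //.
  by rewrite -ltnS.
have hL : 1 <= L by case/andP: (hlamb ord0) => ? ?; lra.
have hlam0 : forall i, 0 < lam i by move=> i; have := hlamb i => /andP[? ?]; lra.
set u := fun k (i : 'I_n.+1) => grad lam b (x k) i ord0.
set w := fun k (i : 'I_n.+1) => u k i ^+ 2.
have hw0 : forall k i, 0 <= w k i by move=> k i; rewrite /w sqr_ge0.
have hu : forall k i, (1 <= k)%N -> u k.+1 i = (1 - alpha k * lam i) * u k i.
  move=> k i hk; rewrite /u /= hiter // !gradE subscE gradE; ring.
have hrec : forall k i, (1 <= k)%N -> w k.+1 i = (1 - alpha k * lam i)^+2 * w k i.
  by move=> k i hk; rewrite /w hu // exprMn.
set S0 := fun k => \sum_(i < n.+1) w k i.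
set S1 := fun k => \sum_(i < n.+1) lam i * w k i.
set S2 := fun k => \sum_(i < n.+1) lam i ^+ 2 * w k i.
have hS0 : forall k, (1 <= k)%N -> 0 < S0 k.
  move=> k hk; rewrite lt_def sumr_ge0 // andbT; apply/eqP => e.
  have hz := psumr_eq0P (fun i _ => hw0 k i) e.
  move/eqP: (hnz k hk); apply; apply/matrixP => i j.
  rewrite (ord1 j) [RHS]mxE; apply/eqP; rewrite -sqrf_eq0; apply/eqP.
  exact: (hz i isT).
have hS01 : forall k, S0 k <= S1 k.
  move=> k; apply: ler_sum => i _ /=; have := hlamb i; have := hw0 k i; move=> ? /andP[? ?]; nra.
have hS10 : forall k, S1 k <= L * S0 k.
  move=> k; rewrite /S0 /= mulr_sumr; apply: ler_sum => i _ /=; have := hlamb i; have := hw0 k i; move=> ? /andP[? ?]; nra.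
have hS12 : forall k, S1 k <= S2 k.
  move=> k; apply: ler_sum => i _ /=; rewrite expr2 -mulrA; apply: ler_wpM2l; first exact: ltW.
  have := hlamb i; have := hw0 k i; move=> ? /andP[? ?]; nra.
have hS21 : forall k, S2 k <= L * S1 k.
  move=> k; rewrite /S1 /= mulr_sumr; apply: ler_sum => i _ /=; rewrite expr2 -mulrA; apply: ler_wpM2r.
    by rewrite mulr_ge0 // ltW.
  by case/andP: (hlamb i).
have hform : forall p, (1 <= p)%N -> alpha p != 0 ->
    alpha p.+1 = gamma p.+1 * (S0 p / S1 p) + (1 - gamma p.+1) * (S1 p / S2 p).
  move=> p hp hap.
  have E := hstep p.+1 hp (hnz p hp); rewrite /= in E; rewrite E.
  have hs : forall i, (x p.+1 - x p) i ord0 = - alpha p * u p i.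
    by move=> i; rewrite subE hiter // subscE /u /=; ring.
  have hy : forall i, (grad lam b (x p.+1) - grad lam b (x p)) i ord0 = - alpha p * lam i * u p i.
    by move=> i; rewrite subE -/(u p.+1 i) -/(u p i) hu //; ring.
  have e1 : dotv (x p.+1 - x p) (x p.+1 - x p) = alpha p ^+ 2 * S0 p.
    rewrite dotvE /S0 /= mulr_sumr; apply: eq_bigr => i _; rewrite hs /w; ring.
  have e2 : dotv (x p.+1 - x p) (grad lam b (x p.+1) - grad lam b (x p)) = alpha p ^+ 2 * S1 p.
    rewrite dotvE /S1 /= mulr_sumr; apply: eq_bigr => i _; rewrite hs hy /w; ring.
  have e3 : dotv (grad lam b (x p.+1) - grad lam b (x p)) (grad lam b (x p.+1) - grad lam b (x p)) = alpha p ^+ 2 * S2 p.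
    rewrite dotvE /S2 /= mulr_sumr; apply: eq_bigr => i _; rewrite hy /w; ring.
  rewrite e1 e2 e3.
  have h0 := hS0 p hp; have h1 := hS01 p; have h2 := hS12 p.
  have n1 : S1 p != 0 by rewrite gt_eqF //; lra.
  have n2 : S2 p != 0 by rewrite gt_eqF //; lra.
  field; rewrite n1 n2 hap //.
have hL0 : 0 < L by lra.
have hr : forall p, (1 <= p)%N ->
    [/\ 1 <= S0 p / S1 p * L, S0 p / S1 p <= 1, 1 <= S1 p / S2 p * L & S1 p / S2 p <= 1].
  move=> p hp; have h0 := hS0 p hp; have h1 := hS01 p; have h2 := hS12 p.
  have h3 := hS10 p; have h4 := hS21 p.
  have p1 : 0 < S1 p by lra.
  have p2 : 0 < S2 p by lra.
  split.
  - by rewrite mulrAC ler_pdivlMr // mul1r mulrC.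
  - by rewrite ler_pdivrMr // mul1r.
  - by rewrite mulrAC ler_pdivlMr // mul1r mulrC.
  - by rewrite ler_pdivrMr // mul1r.
have hpos : forall k, (1 <= k)%N -> 0 < alpha k.
  elim=> [//|k IH] hk; case: k IH hk => [_ _|k IH _]; first exact: halpha1.
  rewrite hform //; last by rewrite gt_eqF // IH.
  have [a1 a2 a3 a4] := hr k.+1 isT; have := hgamma k.+2 isT => /andP[g0 g1].
  nra.
have hab : forall k, (2 <= k)%N -> 1 <= alpha k * L /\ alpha k <= 1.
  case=> [//|p] hp; have hp1 : (1 <= p)%N by [].
  rewrite hform //; last by rewrite gt_eqF // hpos.
  have [a1 a2 a3 a4] := hr p hp1; have := hgamma p.+1 isT => /andP[g0 g1].
  split; nra.
have hA : forall k (j : 'I_n.+1) e, (2<=k)%N -> 0 <= e ->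
     \sum_(i < n.+1 | (i < j)%N) w k.-1 i <= e -> 2*L*e <= w k.-1 j ->
     alpha k * lam j <= 3/2.
  case=> [//|p] j e hp he hG hwj; have hp1 : (1 <= p)%N by [].
  rewrite /= in hG hwj.
  have hmono : forall i k : 'I_n.+1, (i <= k)%N -> lam i <= lam k by [].
  have hmu : forall i, 0 <= lam i by move=> i; exact: ltW.
  have P1 : 2/3 * lam j * S0 p <= S1 p.
    apply: (@propA R n (w p) lam j e) => //; nra.
  have P2 : 2/3 * lam j * S1 p <= S2 p.
    have := @propA R n (fun i => lam i * w p i) lam j (L * e).
    have -> : \sum_(i < n.+1) lam i * (lam i * w p i) = S2 p.
      by apply: eq_bigr => i _; rewrite mulrA expr2.
    apply => //.
    - by move=> i; rewrite mulr_ge0.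
    - apply: (@le_trans _ _ (\sum_(i < n.+1 | (i < j)%N) L * w p i)).
        apply: ler_sum => i _ /=.
        by apply: ler_wpM2r => //; case/andP: (hlamb i).
      by rewrite -mulr_sumr; apply: ler_wpM2l => //; lra.
    - have := hlamb j => /andP[? ?]; have := hw0 p j; nra.
  have h0 := hS0 p hp1; have h1 := hS01 p; have h2 := hS12 p.
  have p1 : 0 < S1 p by lra.
  have p2 : 0 < S2 p by lra.
  have b1 : S0 p / S1 p * lam j <= 3/2 by rewrite mulrAC ler_pdivrMr //; lra.
  have b2 : S1 p / S2 p * lam j <= 3/2 by rewrite mulrAC ler_pdivrMr //; lra.
  rewrite hform //; last by rewrite gt_eqF // hpos.
  have := hgamma p.+1 isT => /andP[g0 g1]; nra.
have [C [c [hC [hc hfin]]]] :=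
  @all_decay R n lam L alpha w hL hlamb hw0 hrec hab hA n.+1 (leqnn _).
case/andP: hc => hc0 hc1.
exists (Num.sqrt C), (Num.sqrt c); split; first by rewrite sqrtr_gt0.
split.
  apply/andP; split; first by rewrite sqrtr_gt0.
  by rewrite -sqrtr1 ltr_sqrt.
move=> k hk; rewrite /enorm dotvE -sqrtX; last exact: ltW.
rewrite -sqrtrM; last exact: ltW.
apply: ler_wsqrtr; apply: le_trans (hfin k hk).
by rewrite le_eqVlt; apply/orP; left; apply/eqP; apply: eq_big => [i|i _]; rewrite ?ltn_ord // /w /u /= expr2.
Qed.
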